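(* Let $s$, $k$ and $i\le k$ be job indices with $r_i\ge r_s$. Let $C^{\mathrm{edf}}$ denote the minimum completion time $C_i(S)$ over all $(s,k)$-schedules $S$ having the earliest-deadline property that schedule job $i$. Then $$C^{\mathrm{edf}}=C_i(G_{s,k})=\max_{\substack{l\le i\\ r_s\le r_l\le r_i}}\ \min\{\,b\in\mathbb{Z} : b>r_i \text{ and } b\ge r_l+\mathrm{load}_i(r_l,b)\,\}.$$ In particular this value does not depend on $k$.
   Context: Time is discrete (slots $[t,t+1)$, $t\in\mathbb{Z}$). There are $n$ jobs, job $j$ with integer processing time $p_j\ge1$, release time $r_j$, deadline $d_j$; jobs are indexed so that $d_1<d_2<\dots<d_n$, release times are pairwise distinct, and the instance is feasible (some schedule executes every job $j$ for $p_j$ slots within $[r_j,d_j)$). A (partial) schedule assigns to each slot at most one job so that every job it schedules receives exactly $p_j$ slots within $[r_j,d_j)$. $C_j(S)$ is the end of the last slot of job $j$ in $S$ and $C_{\max}(S)=\max_j C_j(S)$. $S$ has the earliest-deadline property if whenever it is busy at slot $t$ it executes, among the jobs it schedules that are released by $t$ and not yet completed, the one with the smallest deadline. For $s\in\{1,\dots,n\}$, $k\in\{0,\dots,n\}$, an $(s,k)$-schedule is a schedule $S$ with $C_{\max}(S)\le d_k$ that schedules exactly the jobs $j\le k$ with $r_s\le r_j<C_{\max}(S)$; the empty schedule is an $(s,k)$-schedule with $C_{\max}=r_s$. The greedy schedule $G_{s,k}$ schedules the jobs $j\le k$ with $r_j\ge r_s$ by, at each slot $t=r_s,r_s+1,\dots$,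 executing the released, not yet completed such job of smallest deadline (idling if none). For a job $i$ and times $a<b$, $\mathrm{load}_i(a,b)=\sum_{j\le i,\ a\le r_j<b}p_j$. *)

(* Defs.v *)
From mathcomp Require Import all_boot all_order all_algebra.
Set Implicit Arguments. Unset Strict Implicit. Unset Printing Implicit Defensive.
Import Order.TTheory GRing.Theory Num.Theory.
Local Open Scope ring_scope.

(* An instance: n jobs, job j (1 <= j <= n) has processing time p j,
   release time r j and deadline d j. Values outside 1..n are irrelevant. *)
Record instance := Instance {
  njobs : nat;
  ptime : nat -> nat;
  rtime : nat -> int;
  dtime : nat -> int }.

Definition is_job (I : instance) (j : nat) : bool := (1 <= j <= njobs I)%N.

(* A (partial) schedule: slot [t,t+1) executes job S t, or idles (None). *)
Definition sched := int -> option nat.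

Definition count_slots (S : sched) (j : nat) (a b : int) : nat :=
  count (fun u : nat => S (a + u%:Z) == Some j)
        (iota 0 (if a <= b then absz (b - a) else 0%N)).

Definition scheduled (S : sched) (j : nat) : Prop := exists t, S t = Some j.

Definition is_schedule (I : instance) (S : sched) : Prop :=
  (forall t j, S t = Some j -> is_job I j /\ rtime I j <= t < dtime I j) /\
  (forall j, scheduled S j -> count_slots S j (rtime I j) (dtime I j) = ptime I j).

Definition valid_instance (I : instance) : Prop :=
  (forall j, is_job I j -> (1 <= ptime I j)%N) /\
  (forall j j', is_job I j -> is_job I j' -> (j < j')%N -> dtime I j < dtime I j') /\
  (forall j j', is_job I j -> is_job I j' -> rtime I j = rtime I j' -> j = j') /\
  (exists S, is_schedule I S /\ forall j, is_job I j -> scheduled S j).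

(* C_j(S) = c : the end of the last slot of job j in S is c *)
Definition is_completion (S : sched) (j : nat) (c : int) : Prop :=
  S (c - 1) = Some j /\ forall t, S t = Some j -> t < c.

(* C_max(S) = c, with the convention C_max(empty) = r_s *)
Definition is_cmax (I : instance) (s : nat) (S : sched) (c : int) : Prop :=
  ((forall t, S t = None) /\ c = rtime I s) \/
  (exists j, S (c - 1) = Some j /\ forall t j', S t = Some j' -> t < c).

Definition sk_schedule (I : instance) (s k : nat) (S : sched) : Prop :=
  is_schedule I S /\
  exists c, is_cmax I s S c /\ c <= dtime I k /\
    forall j, scheduled S j <->
      ((1 <= j <= k)%N /\ rtime I s <= rtime I j /\ rtime I j < c).

Definition edf (I : instance) (S : sched) : Prop :=
  forall t j l, S t = Some j -> scheduled S l -> rtime I l <= t ->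
    (forall c, is_completion S l c -> t < c) -> dtime I j <= dtime I l.

(* The greedy schedule G_{s,k}.  At step u (slot r_s + u), with remaining
   processing times rem, execute the released, uncompleted job j <= k with
   r_j >= r_s of smallest deadline. *)
Definition g_eligible (I : instance) (s k : nat) (rem : nat -> nat) (u : nat)
  (j : nat) : bool :=
  [&& (1 <= j <= k)%N, rtime I s <= rtime I j, rtime I j <= rtime I s + u%:Z
    & (0 < rem j)%N].

Definition g_pick (I : instance) (s k : nat) (rem : nat -> nat) (u : nat)
  : option nat :=
  foldl (fun best j =>
           if g_eligible I s k rem u j then
             match best with
             | None => Some j
             | Some b => if dtime I j < dtime I b then Some j else best
             end
           else best) None (iota 1 k).

Fixpoint g_rem (I : instance) (s k : nat) (u : nat) : nat -> nat :=
  match u with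
  | 0%N => ptime I
  | u'.+1 => let R := g_rem I s k u' in
             fun j => if g_pick I s k R u' == Some j then (R j).-1 else R j
  end.

Definition greedy (I : instance) (s k : nat) : sched :=
  fun t => if rtime I s <= t then
             let u := absz (t - rtime I s) in g_pick I s k (g_rem I s k u) u
           else None.

Definition load (I : instance) (i : nat) (a b : int) : int :=
  Posz (\sum_(1 <= j < i.+1 | ((a <= rtime I j)%R && (rtime I j < b)%R)) ptime I j)%N.

Definition bound_ok (I : instance) (i l : nat) (b : int) : Prop :=
  rtime I i < b /\ rtime I l + load I i (rtime I l) b <= b.

Definition is_min_bound (I : instance) (i l : nat) (b : int) : Prop :=
  bound_ok I i l b /\ forall b', bound_ok I i l b' -> b <= b'.

Definition is_formula_value (I : instance) (s i : nat) (v : int) : Prop :=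
  (exists l, [/\ (1 <= l <= i)%N, rtime I s <= rtime I l, rtime I l <= rtime I i
                 & is_min_bound I i l v]) /\
  (forall l b, (1 <= l <= i)%N -> rtime I s <= rtime I l -> rtime I l <= rtime I i ->
     is_min_bound I i l b -> b <= v).

(* Main.v *)
Require Import Defs.
From mathcomp Require Import all_boot all_order all_algebra zify.
Import Order.TTheory GRing.Theory Num.Theory.
Local Open Scope ring_scope.

Lemma sum_eq1 (X : seq nat) (j0 : nat) : uniq X ->
  (\sum_(j <- X) (j0 == j) = (j0 \in X))%N.
Proof.
elim: X => [|x X IH] /=; first by rewrite big_nil.
case/andP=> xX uX; rewrite big_cons IH // in_cons.
case: eqP => [->|] //=; by rewrite (negbTE xX).
Qed.

Lemma sum_slot (X : seq nat) (o : option nat) : uniq X ->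
  (\sum_(j <- X) (o == Some j) = if o is Some j0 then (j0 \in X : nat) else 0)%N.
Proof.
move=> uX; case: o => [j0|].
  rewrite -sum_eq1 //; apply: eq_bigr => j _; by [].
by rewrite big1.
Qed.

Lemma sum_count_le (f : nat -> option nat) (X : seq nat) (n : nat) : uniq X ->
  (\sum_(j <- X) count (fun u => f u == Some j) (iota 0 n) <= n)%N.
Proof.
move=> uX; elim: n => [|n IH]; first by rewrite big1.
under eq_bigr => j _ do rewrite -addn1 iotaD count_cat /= addn0.
rewrite big_split /= sum_slot // -addn1 leq_add //.
by case: (f (0 + n)%N) => // j0; case: (j0 \in X).
Qed.

Lemma sum_count_eq (f : nat -> option nat) (X : seq nat) (n : nat) : uniq X ->
  (forall u, (u < n)%N -> exists2 j, j \in X & f u = Some j) ->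
  (\sum_(j <- X) count (fun u => f u == Some j) (iota 0 n) = n)%N.
Proof.
move=> uX; elim: n => [|n IH] H; first by rewrite big1.
under eq_bigr => j _ do rewrite -addn1 iotaD count_cat /= addn0.
rewrite big_split /= sum_slot // IH; last by move=> u lt; apply: H; lia.
have [j jX ->] := H n (ltnSn n); by rewrite jX addn1.
Qed.

Lemma leq_sum_in (X : seq nat) (f g : nat -> nat) :
  (forall j, j \in X -> f j <= g j)%N ->
  (\sum_(j <- X) f j <= \sum_(j <- X) g j)%N.
Proof. by move=> H; rewrite !(big_seq); apply: leq_sum. Qed.

Lemma sum_lt (X : seq nat) (f g : nat -> nat) (j0 : nat) :
  (forall j, j \in X -> f j <= g j)%N -> j0 \in X -> (f j0 < g j0)%N ->
  (\sum_(j <- X) f j < \sum_(j <- X) g j)%N.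
Proof.
elim: X => [|x X IH] // H; rewrite in_cons !big_cons => /orP [/eqP ->|jX] lt.
  rewrite -addSn leq_add //; apply: leq_sum_in => j jX; apply: H; by rewrite in_cons jX orbT.
have h1 : (f x <= g x)%N by apply: H; rewrite in_cons eqxx.
have : (\sum_(j <- X) f j < \sum_(j <- X) g j)%N.
  by apply: IH => // j jX'; apply: H; rewrite in_cons jX' orbT.
lia.
Qed.


Definition csl (S : sched) (j : nat) (a : int) (n : nat) : nat :=
  count (fun u : nat => S (a + u%:Z) == Some j) (iota 0 n).

Lemma int_split (a b : int) : a <= b -> b = a + (absz (b - a))%:Z.
Proof. move=> h; lia. Qed.

Lemma count_slots_csl S j (a b : int) : a <= b ->
  count_slots S j a b = csl S j a (absz (b - a)).
Proof. by move=> h; rewrite /count_slots h. Qed.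

Lemma csl_add S j a n m :
  csl S j a (n + m) = (csl S j a n + csl S j (a + n%:Z) m)%N.
Proof.
rewrite /csl iotaD count_cat add0n; congr (_ + _)%N.
rewrite -[n in iota n]addn0 iotaDl count_map; apply: eq_count => u /=.
by rewrite PoszD addrA.
Qed.

Lemma csl0 S j a n : (forall u, (u < n)%N -> S (a + u%:Z) <> Some j) -> csl S j a n = 0%N.
Proof.
move=> H; rewrite /csl; transitivity (count pred0 (iota 0 n)); last exact: count_pred0.
apply: eq_in_count => u.
rewrite mem_iota add0n => /andP [_ lt] /=.
by apply/negbTE/eqP; exact: H u lt.
Qed.

Lemma shrink S j (a a' b' b : int) : a <= a' -> a' <= b' -> b' <= b ->
  (forall t, S t = Some j -> a <= t < b -> a' <= t < b') ->
  count_slots S j a b = count_slots S j a' b'.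
Proof.
move=> h1 h2 h3 H.
have h4 : a <= b by apply: le_trans h3; apply: le_trans h2.
rewrite !count_slots_csl //.
set x := absz (a' - a); set n := absz (b' - a'); set y := absz (b - b').
have ea' : a' = a + x%:Z by apply: int_split.
have eb' : b' = a' + n%:Z by apply: int_split.
have eb : b = b' + y%:Z by apply: int_split.
have -> : absz (b - a) = (x + n + y)%N.
  rewrite /x /n /y; lia.
rewrite !csl_add PoszD addrA -ea' -eb'.
rewrite (@csl0 S j a x) ?(@csl0 S j b' y) ?add0n ?addn0 //.
  move=> u lt E; have := H _ E; rewrite eb; lia.
move=> u lt E; have := H _ E; rewrite ea'; lia.
Qed.

Lemma slots_eq S j (a b a' b' : int) : a <= b -> a' <= b' ->
  (forall t, S t = Some j -> (a <= t < b) /\ (a' <= t < b')) ->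
  count_slots S j a b = count_slots S j a' b'.
Proof.
move=> h1 h2 H.
pose lo := Order.min a a'; pose hi := Order.max b b'.
have l1 : lo <= a by rewrite ge_min lexx.
have l2 : lo <= a' by rewrite ge_min lexx orbT.
have l3 : b <= hi by rewrite le_max lexx.
have l4 : b' <= hi by rewrite le_max lexx orbT.
rewrite -(@shrink S j lo a b hi) //; last by move=> t E _; case: (H t E).
rewrite -(@shrink S j lo a' b' hi) //; by move=> t E _; case: (H t E).
Qed.

Lemma sum_csl_le S (X : seq nat) a n : uniq X ->
  (\sum_(j <- X) csl S j a n <= n)%N.
Proof. move=> u; exact: (@sum_count_le (fun u => S (a + u%:Z))). Qed.


Definition jobsX (I : instance) (i : nat) (a b : int) :=
  [seq j <- iota 1 i | (a <= rtime I j) && (rtime I j < b)].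

Lemma jobsX_uniq I i a b : uniq (jobsX I i a b).
Proof. by rewrite filter_uniq // iota_uniq. Qed.

Lemma mem_jobsX I i a b j :
  (j \in jobsX I i a b) = [&& (1 <= j <= i)%N, a <= rtime I j & rtime I j < b].
Proof.
rewrite mem_filter mem_iota.
case: (a <= rtime I j); case: (rtime I j < b) => //=; rewrite ?andbF //.
case: (1 <= j)%N => //=; lia.
Qed.

Lemma load_seq I i a b :
  load I i a b = Posz (\sum_(j <- jobsX I i a b) ptime I j).
Proof. by rewrite /load big_filter /index_iota subn1. Qed.

Lemma CL I S i a b : is_schedule I S -> a <= b ->
  (forall j, (1 <= j <= i)%N -> a <= rtime I j -> rtime I j < b ->
     scheduled S j /\ forall t, S t = Some j -> t < b) ->
  a + load I i a b <= b.
Proof.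
move=> [S1 S2] ab H; rewrite load_seq.
have E : (\sum_(j <- jobsX I i a b) ptime I j =
          \sum_(j <- jobsX I i a b) csl S j a (absz (b - a)))%N.
  apply: eq_big_seq => j; rewrite mem_jobsX => /and3P [h1 h2 h3].
  have [sc sl] := H j h1 h2 h3.
  rewrite -(S2 j sc) -count_slots_csl //.
  have [t0 /S1 [_ /andP[t1 t2]]] := sc.
  apply: slots_eq; first by apply: le_trans t1 (ltW t2).
    by [].
  move=> t /[dup] /S1 [_ /andP [r1 r2]] St; split; apply/andP; split => //.
    exact: le_trans r1.
  exact: sl.
rewrite E.
have := @sum_csl_le S _ a (absz (b - a)) (jobsX_uniq I i a b).
move: (\sum_(j <- _) _)%N => m; lia.
Qed.


Lemma dl_mono I j j' : valid_instance I -> is_job I j -> is_job I j' ->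
  dtime I j <= dtime I j' -> (j <= j')%N.
Proof.
move=> [_ [V _]] hj hj' le; rewrite leqNgt; apply/negP => lt.
have := V _ _ hj' hj lt; rewrite ltNge le //.
Qed.

Lemma LB I s k i S c l : valid_instance I -> (k <= njobs I)%N -> (1 <= i <= k)%N ->
  sk_schedule I s k S -> edf I S -> is_completion S i c ->
  (1 <= l <= i)%N -> rtime I s <= rtime I l -> rtime I l <= rtime I i ->
  bound_ok I i l c.
Proof.
move=> V kn /andP [i1 ik] [Ssch [cm [hcm [cmk hsch]]]] E [Sc1 Sc2] /andP [l1 li] sl li'.
have [_ /andP [ri1 ri2]] := Ssch.1 _ _ Sc1.
have ccm : c <= cm.
  case: hcm => [[allN _] | [j' [_ Hall]]]; first by rewrite allN in Sc1.
  have := Hall _ _ Sc1; lia.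
split; first lia.
apply: (CL _ _ _ _ _ Ssch); first lia.
move=> j /andP [j1 ji] lj jc.
have sj : scheduled S j.
  apply/hsch; split; first by apply/andP; split => //; apply: leq_trans ji ik.
  split; [exact: le_trans lj | exact: lt_le_trans ccm].
split => // t St.
case: (eqVneq j i) => [ej|ne]; first by rewrite ej in St; exact: Sc2.
rewrite ltNge; apply/negP => ct.
have := E (c - 1) i j Sc1 sj _ _.
have hj : is_job I j by rewrite /is_job j1 /=; apply: leq_trans kn; apply: leq_trans ik.
have hi : is_job I i by rewrite /is_job i1 /=; apply: leq_trans kn.
have lt : (j < i)%N by rewrite ltn_neqAle ne ji.
have := V.2.1 _ _ hj hi lt => dji.
have h1 : rtime I j <= c - 1 by lia.
have h2 : forall c', is_completion S j c' -> c - 1 < c'.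
  move=> c' [_ h]; have := h _ St; lia.
move=> /(_ h1 h2); rewrite leNgt dji //.
Qed.


Definition gstep (I : instance) (el : nat -> bool) (best : option nat) (j : nat) :=
  if el j then
    match best with
    | None => Some j
    | Some b => if dtime I j < dtime I b then Some j else best
    end
  else best.

Lemma fold_spec I el (l : seq nat) (acc : option nat) :
  (foldl (gstep I el) acc l = None -> acc = None /\ forall j, j \in l -> ~~ el j) /\
  (forall j, foldl (gstep I el) acc l = Some j ->
     (acc = Some j \/ (j \in l /\ el j)) /\
     (forall j', j' \in l -> el j' -> dtime I j <= dtime I j') /\
     (forall b, acc = Some b -> dtime I j <= dtime I b)).
Proof.
elim: l acc => [|x l IH] acc /=.
  split; first by [].
  move=> j ->; split; first by left.
  by split => // b [->].
have [IH1 IH2] := IH (gstep I el acc x).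
rewrite /gstep in IH1 IH2 *.
move: IH1 IH2; case ex: (el x) => IH1 IH2; last first.
  split.
    move=> /IH1 [-> H]; split => // j; rewrite in_cons => /orP [/eqP ->|/H] //.
    by rewrite ex.
  move=> j /IH2 [h1 [h2 h3]]; split.
    case: h1 => [->|[jl ej]]; [by left | by right; rewrite in_cons jl orbT].
  split => //; move=> j'; rewrite in_cons => /orP [/eqP ->|jl]; first by rewrite ex.
  exact: h2.
case: acc IH1 IH2 => [b|] IH1 IH2.
  case db: (dtime I x < dtime I b) in IH1 IH2 *.
    split; first by move=> /IH1 [].
    move=> j /IH2 [h1 [h2 h3]]; have h3' := h3 x erefl.
    split.
      case: h1 => [[<-]|[jl ej]]; right; [by rewrite in_cons eqxx | by rewrite in_cons jl orbT].
    split; last by move=> b0 [<-]; apply: le_trans h3' (ltW db).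
    by move=> j'; rewrite in_cons => /orP [/eqP ->|jl] //; apply: h2.
  split; first by move=> /IH1 [].
  move=> j /IH2 [h1 [h2 h3]]; have h3' := h3 b erefl.
  split.
    case: h1 => [->|[jl ej]]; [by left | by right; rewrite in_cons jl orbT].
  split; last by move=> b0 [<-].
  move=> j'; rewrite in_cons => /orP [/eqP ->|jl] ej'; last by apply: h2.
  apply: le_trans h3' _; by rewrite leNgt db.
split; first by move=> /IH1 [].
move=> j /IH2 [h1 [h2 h3]]; have h3' := h3 x erefl.
split.
  case: h1 => [[<-]|[jl ej]]; right; [by rewrite in_cons eqxx | by rewrite in_cons jl orbT].
split => //.
by move=> j'; rewrite in_cons => /orP [/eqP ->|jl] //; apply: h2.
Qed.

Lemma g_pick_some I s k R u j : g_pick I s k R u = Some j ->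
  g_eligible I s k R u j /\
  forall j', g_eligible I s k R u j' -> dtime I j <= dtime I j'.
Proof.
rewrite /g_pick.
have := fold_spec I (g_eligible I s k R u) (iota 1 k) None.
rewrite /gstep => [[_ H]] /H [[//|[_ ej]] [h2 _]]; split => // j' ej'.
apply: h2 => //; move: ej'; rewrite /g_eligible mem_iota => /and4P [/andP [a b] _ _ _].
apply/andP; split => //; lia.
Qed.

Lemma g_pick_none I s k R u : g_pick I s k R u = None ->
  forall j, ~~ g_eligible I s k R u j.
Proof.
rewrite /g_pick.
have := fold_spec I (g_eligible I s k R u) (iota 1 k) None.
rewrite /gstep => [[H _]] /H [_ H'] j; apply/negP => ej; move: (ej).
rewrite /g_eligible => /and4P [/andP [a b] _ _ _].
have : j \in iota 1 k by rewrite mem_iota; apply/andP; split => //; lia.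
by move/H'; rewrite ej.
Qed.


Definition GP I s k u := g_pick I s k (g_rem I s k u) u.
Definition cnt I s k j u := count (fun v => GP I s k v == Some j) (iota 0 u).
Definition cntf I s k j a n := count (fun v => GP I s k (a + v)%N == Some j) (iota 0 n).
Definition elig I s k j u :=
  [&& (1 <= j <= k)%N, rtime I s <= rtime I j, rtime I j <= rtime I s + u%:Z
    & (cnt I s k j u < ptime I j)%N].

Lemma cnt_add I s k j a n : cnt I s k j (a + n) = (cnt I s k j a + cntf I s k j a n)%N.
Proof.
rewrite /cnt /cntf iotaD count_cat add0n; congr (_ + _)%N.
by rewrite -[a in iota a]addn0 iotaDl count_map.
Qed.

Lemma cntS I s k j u : cnt I s k j u.+1 = (cnt I s k j u + (GP I s k u == Some j))%N.
Proof. rewrite -addn1 cnt_add /cntf /= !addn0. reflexivity. Qed.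

Lemma cnt_mono I s k j u u' : (u <= u')%N -> (cnt I s k j u <= cnt I s k j u')%N.
Proof. move=> h; rewrite -(subnKC h) cnt_add; exact: leq_addr. Qed.

Lemma rem_cnt I s k u : forall j,
  g_rem I s k u j = (ptime I j - cnt I s k j u)%N /\ (cnt I s k j u <= ptime I j)%N.
Proof.
elim: u => [|u IH] j; first by rewrite /cnt /= subn0.
rewrite cntS /=.
have [e1 e2] := IH j.
rewrite -/(GP I s k u).
case E: (GP I s k u == Some j) => /=.
  have := E; rewrite /GP => /eqP /g_pick_some [+ _].
  rewrite /g_eligible => /and4P [_ _ _]; rewrite e1 => h.
  split; lia.
by rewrite addn0 e1; split.
Qed.

Lemma cnt_le I s k j u : (cnt I s k j u <= ptime I j)%N.
Proof. by case: (rem_cnt I s k u j). Qed.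

Lemma elig_eq I s k u j : g_eligible I s k (g_rem I s k u) u j = elig I s k j u.
Proof.
rewrite /g_eligible /elig; case: (rem_cnt I s k u j) => -> _.
by rewrite subn_gt0.
Qed.

Lemma GP_some I s k u j : GP I s k u = Some j ->
  elig I s k j u /\ forall j', elig I s k j' u -> dtime I j <= dtime I j'.
Proof.
move=> /g_pick_some [h1 h2]; rewrite -elig_eq; split => // j'.
rewrite -elig_eq; exact: h2.
Qed.

Lemma GP_none I s k u : GP I s k u = None -> forall j, ~~ elig I s k j u.
Proof. by move=> /g_pick_none H j; rewrite -elig_eq. Qed.

Definition Jseq I s k := [seq j <- iota 1 k | rtime I s <= rtime I j].

Lemma mem_Jseq I s k j : (j \in Jseq I s k) = ((1 <= j <= k)%N && (rtime I s <= rtime I j)).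
Proof. rewrite mem_filter mem_iota andbC; congr (_ && _); lia. Qed.

Lemma greedy_off I s k (u : nat) : greedy I s k (rtime I s + u%:Z) = GP I s k u.
Proof.
rewrite /greedy.
have -> : (rtime I s <= rtime I s + u%:Z) = true by apply/idP; lia.
have -> : absz (rtime I s + u%:Z - rtime I s)%R = u by lia.
by [].
Qed.

Lemma greedy_some I s k t j : greedy I s k t = Some j ->
  exists u : nat, t = rtime I s + u%:Z /\ GP I s k u = Some j.
Proof.
rewrite /greedy; case: ifP => // h E; exists (absz (t - rtime I s)); split; first lia.
exact: E.
Qed.


Lemma Jseq_uniq I s k : uniq (Jseq I s k).
Proof. by rewrite filter_uniq // iota_uniq. Qed.

Lemma gterm I s k : exists U, forall j, j \in Jseq I s k -> cnt I s k j U = ptime I j.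
Proof.
set J := Jseq I s k.
pose rho j := absz (rtime I j - rtime I s)%R.
pose M := (\sum_(j <- J) rho j)%N; pose Q := (\sum_(j <- J) ptime I j)%N.
exists (M + Q)%N => j0 j0J.
apply/eqP; rewrite eqn_leq cnt_le /= leqNgt; apply/negP => lt.
have hj0 := j0J; rewrite mem_Jseq in hj0; case/andP: hj0 => hk hr.
have rM : (rho j0 <= M)%N by rewrite /M (big_rem j0) //= leq_addr.
have busy : forall v, (v < Q)%N -> exists2 j, j \in J & GP I s k (M + v) = Some j.
  move=> v vQ; case E: (GP I s k (M + v)) => [j|].
    have [ej _] := GP_some _ _ _ _ _ E; exists j => //.
    by rewrite mem_Jseq; case/and4P: ej => -> -> _ _.
  have := GP_none _ _ _ _ E j0; rewrite /elig hk hr /=.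
  have -> : (rtime I j0 <= rtime I s + (M + v)%N%:Z) = true by apply/idP; rewrite /rho in rM; lia.
  have : (cnt I s k j0 (M + v) <= cnt I s k j0 (M + Q))%N by apply: cnt_mono; lia.
  move=> h; rewrite /=; have -> : (cnt I s k j0 (M + v) < ptime I j0)%N = true by lia.
  by [].
have S1 := @sum_count_eq (fun v => GP I s k (M + v)) J Q (Jseq_uniq I s k) busy.
have S2 : (\sum_(j <- J) cnt I s k j (M + Q) < \sum_(j <- J) ptime I j)%N.
  apply: sum_lt j0J lt => j _; exact: cnt_le.
have S3 : (\sum_(j <- J) cnt I s k j (M + Q) =
   \sum_(j <- J) cnt I s k j M + \sum_(j <- J) cntf I s k j M Q)%N.
  transitivity (\sum_(j <- J) (cnt I s k j M + cntf I s k j M Q)%N).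
    by apply: eq_bigr => j _; exact: cnt_add.
  exact: big_split.
rewrite /cntf in S3; rewrite S3 S1 in S2; lia.
Qed.

Lemma p_pos I s k j : valid_instance I -> (k <= njobs I)%N -> j \in Jseq I s k ->
  (0 < ptime I j)%N.
Proof.
move=> V kn; rewrite mem_Jseq => /andP [/andP [h1 h2] _]; apply: V.1.
by rewrite /is_job h1; apply: leq_trans kn.
Qed.

Lemma cnt0 I s k j : cnt I s k j 0 = 0%N.
Proof. by []. Qed.

Lemma gcomp I s k j : valid_instance I -> (k <= njobs I)%N -> j \in Jseq I s k ->
  exists c : nat,
  [/\ (0 < c)%N, cnt I s k j c = ptime I j, GP I s k c.-1 = Some j,
      (forall u, (u < c)%N -> (cnt I s k j u < ptime I j)%N)
    & (forall u, GP I s k u = Some j -> (u < c)%N)].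
Proof.
move=> V kn jJ; have pp := p_pos _ _ _ _ V kn jJ.
have [U HU] := gterm I s k.
have ex : exists u, cnt I s k j u == ptime I j by exists U; rewrite HU.
case: (ex_minnP ex) => c /eqP hc hmin.
have lt : forall u, (u < c)%N -> (cnt I s k j u < ptime I j)%N.
  move=> u uc; rewrite ltn_neqAle cnt_le andbT; apply/negP => /hmin; lia.
have c0 : (0 < c)%N by case: c hc {hmin lt} => //; rewrite cnt0; lia.
exists c; split => //.
  have := cntS I s k j c.-1; rewrite prednK // hc.
  have := lt c.-1 (ltac:(lia)).
  case: (GP I s k c.-1 == Some j) /eqP => //; lia.
move=> u /(GP_some _ _ _ _ _) [/and4P [_ _ _ h] _].
rewrite ltnNge; apply/negP => cu.
have := cnt_mono I s k j _ _ cu; lia.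
Qed.

Lemma gcmax I s k j0 : valid_instance I -> (k <= njobs I)%N -> j0 \in Jseq I s k ->
  exists C : nat,
  [/\ (0 < C)%N, (exists j, GP I s k C.-1 = Some j),
      (forall u, (C <= u)%N -> GP I s k u = None)
    & forall j, j \in Jseq I s k -> cnt I s k j C = ptime I j].
Proof.
move=> V kn j0J; have pp := p_pos _ _ _ _ V kn j0J.
have [U HU] := gterm I s k.
have ex : exists u, all (fun j => cnt I s k j u == ptime I j) (Jseq I s k).
  by exists U; apply/allP => j jJ; rewrite HU.
case: (ex_minnP ex) => C /allP hC hmin.
have hC' : forall j, j \in Jseq I s k -> cnt I s k j C = ptime I j.
  by move=> j /hC /eqP.
have C0 : (0 < C)%N.
  case: C hC' {hC hmin} => // /(_ j0 j0J); rewrite cnt0; lia.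
exists C; split => //.
- have : ~~ all (fun j => cnt I s k j C.-1 == ptime I j) (Jseq I s k).
    by apply/negP => /hmin; lia.
  case/allPn => j jJ /eqP ne; exists j.
  have := cntS I s k j C.-1; rewrite prednK // hC' //.
  have := cnt_le I s k j C.-1.
  case: (GP I s k C.-1 == Some j) /eqP => //; lia.
- move=> u Cu; case E: (GP I s k u) => [j|] //.
  have [/and4P [h1 h2 _ h] _] := GP_some _ _ _ _ _ E.
  have jJ : j \in Jseq I s k by rewrite mem_Jseq h1 h2.
  have := cnt_mono I s k j _ _ Cu; rewrite hC' //; lia.
Qed.


Lemma jobk I k j : (k <= njobs I)%N -> (1 <= j <= k)%N -> is_job I j.
Proof. move=> kn /andP [h1 h2]; rewrite /is_job h1 /=; exact: leq_trans kn. Qed.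

Lemma dle I k j j0 : valid_instance I -> (k <= njobs I)%N -> (1 <= j)%N -> (j <= j0)%N ->
  (j0 <= k)%N -> dtime I j <= dtime I j0.
Proof.
move=> V kn h1 h2 h3; case: (eqVneq j j0) => [->//|ne].
apply: ltW; apply: V.2.1; try apply: (jobk _ _ _ kn); try (apply/andP; split); try lia.
Qed.

Lemma GU I s k j0 c0 : valid_instance I -> (k <= njobs I)%N -> j0 \in Jseq I s k ->
  (0 < c0)%N -> cnt I s k j0 c0 = ptime I j0 -> GP I s k c0.-1 = Some j0 ->
  (forall u, (u < c0)%N -> (cnt I s k j0 u < ptime I j0)%N) ->
  exists l, [/\ (1 <= l <= j0)%N, rtime I s <= rtime I l, rtime I l <= rtime I j0 &
    forall b', rtime I j0 < b' -> rtime I l + load I j0 (rtime I l) b' <= b' ->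
      rtime I s + c0%:Z <= b'].
Proof.
move=> V kn j0J c0p hc hlast hlt.
have := j0J; rewrite mem_Jseq => /andP [/andP [j01 j0k] rsj0].
pose rho j := absz (rtime I j - rtime I s)%R.
have Erho : forall j, rtime I s <= rtime I j -> rtime I j = rtime I s + (rho j)%:Z.
  by move=> j h; rewrite /rho; lia.
pose r0 := rho j0.
have Er0 := Erho j0 rsj0.
have r0c : (r0 < c0)%N.
  have [/and4P [_ _ h _] _] := GP_some _ _ _ _ _ hlast.
  rewrite /r0; lia.
pose B v := if GP I s k v is Some j then (j <= j0)%N else false.
have H1 : forall v, (r0 <= v)%N -> (v < c0)%N -> B v.
  move=> v h1 h2.
  have el : elig I s k j0 v.
    rewrite /elig j01 j0k rsj0 hlt //=; apply/idP; rewrite /r0 in h1; lia.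
  case E: (GP I s k v) => [j|]; last by have := GP_none _ _ _ _ E j0; rewrite el.
  have [ej hm] := GP_some _ _ _ _ _ E.
  rewrite /B E; apply: (dl_mono _ _ _ V _ _ (hm j0 el)).
    by case/and4P: ej => h _ _ _; apply: (jobk _ _ _ kn h).
  by apply: (jobk _ _ _ kn); rewrite j01 j0k.
pose Q u := all B (iota u (c0 - u)).
have QP : forall u, (forall v, (u <= v)%N -> (v < c0)%N -> B v) -> Q u.
  move=> u H; apply/allP => v; rewrite mem_iota => /andP [h1 h2]; apply: H => //; lia.
have QP' : forall u, Q u -> forall v, (u <= v)%N -> (v < c0)%N -> B v.
  move=> u /allP H v h1 h2; apply: H; rewrite mem_iota; apply/andP; split => //; lia.
have exQ : exists u, Q u by exists r0; apply: QP.
case: (ex_minnP exQ) => u0 Qu0 hmin.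
have u0r0 : (u0 <= r0)%N by apply: hmin; apply: QP.
have Hu0 := QP' u0 Qu0.
have ClA : forall j, (1 <= j)%N -> (j <= j0)%N -> rtime I s <= rtime I j -> (rho j < u0)%N ->
    cnt I s k j u0 = ptime I j.
  move=> j hj1 hj2 hr hu.
  apply/eqP; rewrite eqn_leq cnt_le /= leqNgt; apply/negP => lt0.
  have lt1 : (cnt I s k j u0.-1 < ptime I j)%N.
    have := cnt_mono I s k j u0.-1 u0 (leq_pred u0); lia.
  have el : elig I s k j u0.-1.
    rewrite /elig hj1 hr lt1 /=.
    have -> : (j <= k)%N by apply: leq_trans j0k.
    by apply/idP; have := Erho j hr; lia.
  case E: (GP I s k u0.-1) => [j'|]; last by have := GP_none _ _ _ _ E j; rewrite el.
  have [ej' hm] := GP_some _ _ _ _ _ E.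
  have dj : dtime I j' <= dtime I j0.
    apply: le_trans (hm j el) _; apply: (dle _ _ _ _ V kn) => //.
  have Bu : B u0.-1.
    rewrite /B E; apply: (dl_mono _ _ _ V _ _ dj).
      by case/and4P: ej' => h _ _ _; apply: (jobk _ _ _ kn h).
    by apply: (jobk _ _ _ kn); rewrite j01 j0k.
  have : Q u0.-1.
    apply: QP => v h1 h2; case: (eqVneq v u0.-1) => [->//|ne]; apply: Hu0 => //; lia.
  move/hmin; lia.
have ClB : forall v j, (u0 <= v)%N -> (v < c0)%N -> GP I s k v = Some j ->
    [/\ (1 <= j <= j0)%N, rtime I s <= rtime I j, (u0 <= rho j)%N & (rho j <= v)%N].
  move=> v j h1 h2 E.
  have := Hu0 v h1 h2; rewrite /B E => jj0.
  have [/and4P [/andP [ej1 _] ej2 ej3 ej4] _] := GP_some _ _ _ _ _ E.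
  have rv : (rho j <= v)%N by have := Erho j ej2; lia.
  split => //; first by rewrite ej1.
  rewrite leqNgt; apply/negP => ru.
  have := ClA j ej1 jj0 ej2 ru.
  have := cnt_mono I s k j u0 v h1; lia.
have Bu0 := Hu0 u0 (leqnn u0) (leq_ltn_trans u0r0 r0c).
case El: (GP I s k u0) Bu0 => [l|]; rewrite /B El // => _.
have [hl1 hl2 hl3 hl4] := ClB u0 l (leqnn u0) (leq_ltn_trans u0r0 r0c) El.
have Erl : rtime I l = rtime I s + u0%:Z by have := Erho l hl2; lia.
exists l; split => //; first by rewrite Erl Er0; rewrite /r0 in u0r0; lia.
move=> b' hb1 hb2; rewrite leNgt; apply/negP => hb3.
pose u1 := absz (b' - rtime I s)%R.
have Eb : b' = rtime I s + u1%:Z by rewrite /u1; lia.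
have r0u1 : (r0 < u1)%N by rewrite /r0; lia.
have u1c : (u1 < c0)%N by lia.
pose X := jobsX I j0 (rtime I l) b'.
have busy : forall v, (v < u1 - u0)%N -> exists2 j, j \in X & GP I s k (u0 + v) = Some j.
  move=> v hv.
  have h1 : (u0 <= u0 + v)%N by apply: leq_addr.
  have h2 : (u0 + v < c0)%N by lia.
  have := Hu0 _ h1 h2; rewrite /B.
  case E: (GP I s k (u0 + v)) => [j|] // _; exists j => //.
  have [hj1 hj2 hj3 hj4] := ClB _ _ h1 h2 E.
  rewrite mem_jobsX hj1 /=; move: (Erho j hj2) => ej; apply/andP; split; rewrite /X in Eb; lia.
have S1 := @sum_count_eq (fun v => GP I s k (u0 + v)) X (u1 - u0) (jobsX_uniq I j0 _ _) busy.
have j0X : j0 \in X.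
  rewrite mem_jobsX j01 leqnn /=; apply/andP; split; rewrite ?Erl ?Er0 /r0; lia.
have S2 : (\sum_(j <- X) cntf I s k j u0 (u1 - u0) < \sum_(j <- X) ptime I j)%N.
  apply: sum_lt j0X _.
    move=> j _; have := cnt_add I s k j u0 (u1 - u0); have := cnt_le I s k j (u0 + (u1 - u0)).
    lia.
  have := cnt_add I s k j0 u0 (u1 - u0); have := hlt u1 u1c.
  have -> : (u0 + (u1 - u0))%N = u1 by lia.
  lia.
rewrite /cntf in S2; rewrite S1 in S2.
move: hb2; rewrite load_seq -/X; lia.
Qed.


Lemma DL I s k j c : valid_instance I -> (k <= njobs I)%N -> j \in Jseq I s k ->
  (0 < c)%N -> cnt I s k j c = ptime I j -> GP I s k c.-1 = Some j ->
  (forall u, (u < c)%N -> (cnt I s k j u < ptime I j)%N) ->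
  rtime I s + c%:Z <= dtime I j.
Proof.
move=> V kn jJ c0 hc hl hlt.
have [l [/andP [l1 lj] sl lrj Hb]] := GU _ _ _ _ _ V kn jJ c0 hc hl hlt.
have := jJ; rewrite mem_Jseq => /andP [/andP [j1 jk] rsj].
have [Sst [[S1 S2] Sall]] := V.2.2.2.
have hj : is_job I j by apply: (jobk _ _ _ kn); rewrite j1 jk.
have [t0 /S1 [_ /andP [t1 t2]]] := Sall j hj.
apply: Hb; first exact: le_lt_trans t1 t2.
apply: (CL _ _ _ _ _ (conj S1 S2)); first by apply: le_trans lrj _; apply: ltW; apply: le_lt_trans t1 t2.
move=> j' /andP [j'1 j'j] h1 h2.
have hj' : is_job I j' by apply: (jobk _ _ _ kn); rewrite j'1 /=; apply: leq_trans jk.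
split; first exact: Sall.
move=> t /S1 [_ /andP [_ h]]; apply: lt_le_trans h _.
by apply: (dle _ _ _ _ V kn) => //.
Qed.

Lemma G_slot I s k t j : valid_instance I -> (k <= njobs I)%N ->
  greedy I s k t = Some j ->
  [/\ j \in Jseq I s k, rtime I j <= t & t < dtime I j].
Proof.
move=> V kn /(greedy_some _ _ _ _ _) [u [-> E]].
have [/and4P [h1 h2 h3 h4] _] := GP_some _ _ _ _ _ E.
have jJ : j \in Jseq I s k by rewrite mem_Jseq h1 h2.
have [c [c0 hc hl hlt hu]] := gcomp _ _ _ _ V kn jJ.
have := DL _ _ _ _ _ V kn jJ c0 hc hl hlt.
have := hu u E; split => //; lia.
Qed.

Lemma G_comp I s k j c : (0 < c)%N -> GP I s k c.-1 = Some j ->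
  (forall u, GP I s k u = Some j -> (u < c)%N) ->
  is_completion (greedy I s k) j (rtime I s + c%:Z).
Proof.
move=> c0 hl hu; split.
  have -> : rtime I s + c%:Z - 1 = rtime I s + (c.-1)%:Z by lia.
  by rewrite greedy_off.
move=> t /(greedy_some _ _ _ _ _) [u [-> E]]; have := hu u E; lia.
Qed.

Lemma G_count I s k j : valid_instance I -> (k <= njobs I)%N -> j \in Jseq I s k ->
  count_slots (greedy I s k) j (rtime I j) (dtime I j) = ptime I j.
Proof.
move=> V kn jJ.
have [c [c0 hc hl hlt hu]] := gcomp _ _ _ _ V kn jJ.
have dl := DL _ _ _ _ _ V kn jJ c0 hc hl hlt.
have := jJ; rewrite mem_Jseq => /andP [_ rsj].
have hl' : greedy I s k (rtime I s + (c.-1)%:Z) = Some j by rewrite greedy_off.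
have [_ rj dj] := G_slot _ _ _ _ _ V kn hl'.
rewrite (@slots_eq _ j _ _ (rtime I s) (rtime I s + c%:Z)).
- rewrite count_slots_csl; last lia.
  have -> : absz (rtime I s + c%:Z - rtime I s)%R = c by lia.
  rewrite -hc /csl /cnt; apply: eq_count => u /=; by rewrite greedy_off.
- exact: le_trans rj (ltW dj).
- lia.
move=> t St; have [_ h1 h2] := G_slot _ _ _ _ _ V kn St.
have [u [Et E]] := greedy_some _ _ _ _ _ St; have := hu u E.
split; apply/andP; split => //; lia.
Qed.

Lemma G_sched I s k : valid_instance I -> (k <= njobs I)%N ->
  is_schedule I (greedy I s k).
Proof.
move=> V kn; split.
  move=> t j St; have [jJ h1 h2] := G_slot _ _ _ _ _ V kn St; split.
    by apply: (jobk _ _ _ kn); move: jJ; rewrite mem_Jseq => /andP [].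
  by rewrite h1 h2.
move=> j [t St]; have [jJ _ _] := G_slot _ _ _ _ _ V kn St.
exact: G_count.
Qed.

Lemma G_sk I s k j0 : valid_instance I -> (k <= njobs I)%N -> j0 \in Jseq I s k ->
  sk_schedule I s k (greedy I s k).
Proof.
move=> V kn j0J; split; first exact: G_sched.
have [C [C0 [j hj] hN hC]] := gcmax _ _ _ _ V kn j0J.
exists (rtime I s + C%:Z).
have e1 : rtime I s + C%:Z - 1 = rtime I s + (C.-1)%:Z by lia.
have hj' : greedy I s k (rtime I s + C%:Z - 1) = Some j by rewrite e1 greedy_off.
have all_lt : forall t j', greedy I s k t = Some j' -> t < rtime I s + C%:Z.
  move=> t j' /(greedy_some _ _ _ _ _) [u [-> E]].
  case: (ltnP u C) => h; first lia.
  by rewrite hN in E.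
split; first by right; exists j.
split.
  have [jJ _ h2] := G_slot _ _ _ _ _ V kn hj'.
  have := jJ; rewrite mem_Jseq => /andP [/andP [j1 jk] _].
  have := dle _ _ _ _ V kn j1 jk (leqnn k); lia.
move=> j'; split.
  move=> [t St]; have [jJ h1 _] := G_slot _ _ _ _ _ V kn St.
  move: jJ; rewrite mem_Jseq => /andP [h3 h4]; split => //; split => //.
  exact: le_lt_trans h1 (all_lt _ _ St).
move=> [h1 [h2 _]].
have jJ : j' \in Jseq I s k by rewrite mem_Jseq h1 h2.
have [c [c0 hc hl hlt hu]] := gcomp _ _ _ _ V kn jJ.
by exists (rtime I s + (c.-1)%:Z); rewrite greedy_off.
Qed.

Lemma G_edf I s k : valid_instance I -> (k <= njobs I)%N -> edf I (greedy I s k).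
Proof.
move=> V kn t j l St [t' Sl] rl Hc.
have [lJ _ _] := G_slot _ _ _ _ _ V kn Sl.
have [u [Et E]] := greedy_some _ _ _ _ _ St.
have [_ hm] := GP_some _ _ _ _ _ E.
have [c [c0 hc hl hlt hu]] := gcomp _ _ _ _ V kn lJ.
have := Hc _ (G_comp _ _ _ _ _ c0 hl hu) => tc.
apply: hm; move: lJ; rewrite mem_Jseq => /andP [h1 h2].
rewrite /elig h1 h2 /=; rewrite hlt; last lia.
rewrite andbT; apply/idP; lia.
Qed.

Theorem lemma1 (I : instance) (s k i : nat) :
  valid_instance I ->
  is_job I s -> (k <= njobs I)%N -> (1 <= i <= k)%N ->
  rtime I s <= rtime I i ->
  exists v : int,
    is_formula_value I s i v /\
    is_completion (greedy I s k) i v /\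
    (exists S, [/\ sk_schedule I s k S, edf I S, scheduled S i
                 & is_completion S i v]) /\
    (forall S c, sk_schedule I s k S -> edf I S -> scheduled S i ->
       is_completion S i c -> v <= c).
Proof.
move=> V _ kn ik rsi.
have iJ : i \in Jseq I s k by rewrite mem_Jseq ik rsi.
have [c [c0 hc hl hlt hu]] := gcomp _ _ _ _ V kn iJ.
have [l [hl1 hl2 hl3 Hb]] := GU _ _ _ _ _ V kn iJ c0 hc hl hlt.
have Gc := G_comp _ _ _ _ _ c0 hl hu.
have Gsk := G_sk _ _ _ _ V kn iJ.
have Ge := G_edf _ s _ V kn.
exists (rtime I s + c%:Z).
have mb : is_min_bound I i l (rtime I s + c%:Z).
  split; first exact: (LB _ _ _ _ _ _ _ V kn ik Gsk Ge Gc hl1 hl2 hl3).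
  by move=> b' [h1 h2]; apply: Hb.
split.
  split; first by exists l; split.
  move=> l' b h1 h2 h3 [_ hmin]; apply: hmin.
  exact: (LB _ _ _ _ _ _ _ V kn ik Gsk Ge Gc h1 h2 h3).
split => //.
split.
  exists (greedy I s k); split => //; by exists (rtime I s + (c.-1)%:Z); rewrite greedy_off.
move=> S c' Ssk Se _ Sc.
case: mb => _ hmin; apply: hmin.
exact: (LB _ _ _ _ _ _ _ V kn ik Ssk Se Sc hl1 hl2 hl3).
Qed.
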